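(* Let $G$ be an arbitrary group and let $S$ be a nonempty finite subset of $G$. Then every complement $C$ of $S$ in $G$ (i.e. every nonempty $C\subseteq G$ with $SC=G$) contains a minimal complement of $S$ in $G$.
   Context: For nonempty subsets $A,B$ of a group $G$, $AB=\{ab: a\in A, b\in B\}$. A nonempty set $W'\subseteq G$ is a complement to a nonempty set $W\subseteq G$ if $WW'=G$; it is a minimal complement if moreover $W(W'\setminus\{w'\})\neq G$ for every $w'\in W'$, i.e. no proper subset of $W'$ is a complement to $W$. *)

(* Defs.v *)
From Stdlib Require Import List.

Record Group := {
  carrier :> Type;
  gmul : carrier -> carrier -> carrier;
  gone : carrier;
  ginv : carrier -> carrier;
  gmulA : forall x y z, gmul x (gmul y z) = gmul (gmul x y) z;
  gmul1 : forall x, gmul gone x = x;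
  gmulV : forall x, gmul (ginv x) x = gone
}.

Definition subset (G : Group) := G -> Prop.

Definition nonempty {G : Group} (A : subset G) : Prop := exists x, A x.

Definition finite_subset {G : Group} (A : subset G) : Prop :=
  exists l : list G, forall x, A x <-> In x l.

Definition included {G : Group} (A B : subset G) : Prop := forall x, A x -> B x.

Definition setmul {G : Group} (A B : subset G) : subset G :=
  fun g => exists a b, A a /\ B b /\ g = gmul G a b.

Definition setD1 {G : Group} (A : subset G) (w : G) : subset G :=
  fun x => A x /\ x <> w.

Definition is_whole {G : Group} (A : subset G) : Prop := forall g : G, A g.

Definition is_complement {G : Group} (W W' : subset G) : Prop :=
  nonempty W' /\ is_whole (setmul W W').

Definition is_minimal_complement {G : Group} (W W' : subset G) : Prop :=
  is_complement W W' /\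
  forall w', W' w' -> ~ is_whole (setmul W (setD1 W' w')).

(* Main.v *)
From mathcomp Require all_boot classical_sets boolp.
Module Z.
Import all_boot classical_sets boolp.
Local Open Scope classical_set_scope.
Lemma myzorn (T : Type) (P : (T -> Prop) -> Prop) :
  (forall F : (T -> Prop) -> Prop, (forall X, F X -> P X) ->
     (forall X Y, F X -> F Y -> (forall x, X x -> Y x) \/ (forall x, Y x -> X x)) ->
     P (fun x => exists X, F X /\ X x)) ->
  exists A, P A /\ forall B, (forall x, A x -> B x) -> (exists x, B x /\ ~ A x) -> ~ P B.
Proof.
move=> H.
have [|A [PA HA]] := @Zorn_bigcup T P.
  move=> F FP Ftot.
  have -> : \bigcup_(X in F) X = (fun x => exists X, F X /\ X x).
    by apply/funext => x; apply/propext; split => [[X FX Xx]|[X [FX Xx]]]; exists X.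
  by apply: H => // X Y FX FY; exact: Ftot.
exists A; split => // B AB [x [Bx nAx]]; apply: HA; split => //.
by move=> BA; apply: nAx; exact: BA.
Qed.
End Z.
Print Assumptions Z.myzorn.

Require Import Defs.
From Stdlib Require Import List Classical.

Lemma cancel_l (G : Group) (s c c' : G) :
  gmul G s c = gmul G s c' -> c = c'.
Proof.
  intro H.
  rewrite <- (gmul1 G c), <- (gmul1 G c'), <- (gmulV G s), <- !gmulA, H.
  reflexivity.
Qed.

Theorem theorem1p1 (G : Group) (S : subset G) :
  nonempty S -> finite_subset S ->
  forall C : subset G, is_complement S C ->
  exists M : subset G, included M C /\ is_minimal_complement S M.
Proof.
  intros _ [l Hl] C [_ HC].
  set (P := fun D : G -> Prop => forall g : G, exists s c, S s /\ C c /\ ~ D c /\ g = gmul G s c).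
  destruct (Z.myzorn G P) as [A [PA HA]].
  - intros F FP Ftot g.
    apply NNPP; intro Hn.
    assert (Hcov : forall s c, S s -> C c -> g = gmul G s c -> exists X, F X /\ X c).
    { intros s c Ss Cc E. apply NNPP; intro N. apply Hn. exists s, c. auto. }
    assert (Hind : forall l', (forall s, In s l' -> S s) ->
              exists X, (F X \/ forall x, ~ X x) /\
                forall s c, In s l' -> C c -> g = gmul G s c -> X c).
    { induction l' as [|s l' IH]; intro Hsub.
      - exists (fun _ => False). split. right; auto. intros s c [].
      - destruct IH as [X [HX1 HX2]]. { intros; apply Hsub; simpl; auto. }
        destruct (classic (exists c, C c /\ g = gmul G s c)) as [[c [Cc Ec]]|Hno].
        + destruct (Hcov s c (Hsub s (or_introl eq_refl)) Cc Ec) as [Y [FY Yc]].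
          assert (Hs : forall c', C c' -> g = gmul G s c' -> Y c').
          { intros c' _ E'. assert (c = c') by (apply (cancel_l G s); congruence).
            subst; auto. }
          destruct HX1 as [FX|EX].
          * destruct (Ftot X Y FX FY) as [XY|YX].
            -- exists Y. split; [left; auto|]. intros s' c' [<-|I] Cc' E'; eauto.
            -- exists X. split; [left; auto|]. intros s' c' [<-|I] Cc' E'; eauto.
          * exists Y. split; [left; auto|]. intros s' c' [<-|I] Cc' E'; eauto.
            exfalso. apply (EX c'); eauto.
        + exists X. split; auto. intros s' c' [<-|I] Cc' E'; eauto.
          exfalso; apply Hno; eauto. }
    destruct (Hind l) as [X [[FX|EX] HX]].
    { intros; apply Hl; auto. }
    + destruct (FP X FX g) as [s [c [Ss [Cc [nX E]]]]].
      apply nX. apply (HX s c); auto. apply Hl; auto.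
    + destruct (HC g) as [s [c [Ss [Cc E]]]].
      apply (EX c). apply (HX s c); auto. apply Hl; auto.
  - exists (fun x => C x /\ ~ A x). split.
    { intros x [Cx _]; exact Cx. }
    split; [split|].
    + destruct (PA (gone G)) as [s [c [_ [Cc [nA _]]]]]. exists c. auto.
    + intro g. destruct (PA g) as [s [c [Ss [Cc [nA E]]]]]. exists s, c. auto.
    + intros w' [Cw nAw] Hw.
      apply (HA (fun x => A x \/ x = w')).
      * intros x Ax; left; auto.
      * exists w'. auto.
      * intro g. destruct (Hw g) as [a [b [Sa [[[Cb nAb] nbw] E]]]].
        exists a, b. repeat split; auto. intros [Ab|Eb]; auto.
Qed.
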